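(* Let $p$ be a prime, and let $H,H_1,\dots,H_r$ be subspaces of $\mathbb F_p^k$ with $H=H_1\cap\dots\cap H_r$. Then there exists $i\in[r]$ such that $\mu(H_i)\ge\mu(H)$.
   Context: For $x\in\mathbb F_p^k$, $|x|$ is the number of nonzero coordinates, and $V^\perp$ is the orthogonal complement under the standard dot product. For a proper subspace $H<\mathbb F_p^k$, \[ \mu(H)=\max_{W>H,\ \dim W=\dim H+1}\ \min_{v\in H^\perp\setminus W^\perp}|v|, \] and $\mu(\mathbb F_p^k)=0$. *)

(* Defs.v *)
From HB Require Import structures.
From mathcomp Require Import all_boot all_order all_algebra.
Set Implicit Arguments. Unset Strict Implicit. Unset Printing Implicit Defensive.
Import GRing.Theory.
Local Open Scope ring_scope.

(* Subspaces of F^k are represented as row spaces of square k x k matrices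
   (mxalgebra), vectors of F^k as row vectors 'rV[F]_k. *)

Definition hweight (F : fieldType) (k : nat) (x : 'rV[F]_k) : nat :=
  #|[set i : 'I_k | x 0 i != 0]|.

(* v lies in the orthogonal complement H^perp for the standard dot product
   (v . h = v *m h^T); this is independent of the matrix representing H. *)
Definition in_perp (F : fieldType) (k : nat) (H : 'M[F]_k) (v : 'rV[F]_k) : bool :=
  v *m H^T == 0.

Definition mu (F : finFieldType) (k : nat) (H : 'M[F]_k) : nat :=
  if \rank H == k then 0%N
  else \max_(W : 'M[F]_k | ((H < W)%MS && (\rank W == (\rank H).+1)))
         \big[minn/k]_(v : 'rV[F]_k | in_perp H v && ~~ in_perp W v) hweight v.

(* Main.v *)
Require Import Defs.
From HB Require Import structures.
From mathcomp Require Import all_boot all_order all_algebra.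
Set Implicit Arguments. Unset Strict Implicit. Unset Printing Implicit Defensive.
Import GRing.Theory.
Local Open Scope ring_scope.

Lemma perp_sub (F : fieldType) k m1 m2 (A : 'M[F]_(m1,k)) (B : 'M[F]_(m2,k)) (v : 'rV[F]_k) :
  (B <= A)%MS -> v *m A^T = 0 -> v *m B^T = 0.
Proof.
move=> /submxP [X ->] hv.
by rewrite trmx_mul mulmxA hv mul0mx.
Qed.

Lemma perp_adds (F : fieldType) k m1 m2 (A : 'M[F]_(m1,k)) (B : 'M[F]_(m2,k)) (v : 'rV[F]_k) :
  v *m A^T = 0 -> v *m B^T = 0 -> v *m (A + B)%MS^T = 0.
Proof.
move=> hA hB; apply: (@perp_sub _ _ _ _ (col_mx A B)).
  by rewrite addsmxE.
by rewrite tr_col_mx mul_mx_row hA hB row_mx0.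
Qed.

Lemma bigmin_le_k (T : finType) (P : pred T) (f : T -> nat) k :
  (\big[minn/k]_(v | P v) f v <= k)%N.
Proof.
apply: (big_rec (fun x => x <= k)%N) => // i x _ hx.
exact: leq_trans (geq_minr _ _) hx.
Qed.

Lemma bigmin_le (T : finType) (P : pred T) (f : T -> nat) k v :
  P v -> (\big[minn/k]_(v | P v) f v <= f v)%N.
Proof.
move=> Pv.
have : v \in index_enum T by rewrite mem_index_enum.
elim: (index_enum T) => // a s IH; rewrite inE big_cons => /predU1P [<-|h].
  by rewrite Pv geq_minl.
case: (P a); [exact: leq_trans (geq_minr _ _) (IH h) | exact: IH h].
Qed.

Lemma bigmin_sub (T : finType) (P Q : pred T) (f : T -> nat) k :
  (forall v, Q v -> P v) ->
  (\big[minn/k]_(v | P v) f v <= \big[minn/k]_(v | Q v) f v)%N.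
Proof.
move=> QP; set a := (\big[minn/k]_(v | P v) f v).
apply: (big_rec (fun x => a <= x)%N); first exact: bigmin_le_k.
move=> i x Qi hx; rewrite leq_min hx andbT.
by apply: bigmin_le; apply: QP.
Qed.

Theorem lemma6p17 (p : nat) (k r : nat) (H : 'M['F_p]_k) (Hs : 'I_r -> 'M['F_p]_k) :
  prime p -> (0 < r)%N ->
  (H == \bigcap_(i < r) Hs i)%MS ->
  exists i : 'I_r, (mu H <= mu (Hs i))%N.
Proof.
move=> _ r0 /eqmxP eqH.
have [i0 Hi0] : {i0 : 'I_r | \max_i mu (Hs i) = mu (Hs i0)}.
  by apply: eq_bigmax; rewrite card_ord.
exists i0; rewrite -Hi0.
rewrite {1}/mu; case: ifP => // Hk.
apply/bigmax_leqP => W /andP [/andP [HW WH] rW].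
have [j wj] := row_subPn WH.
set w := row j W in wj.
have [i wi] : exists i, ~~ (w <= Hs i)%MS.
  apply/existsP; apply: contraT; rewrite negb_exists => /forallP /= all.
  case/negP: wj; rewrite eqH; apply/sub_bigcapmxP => i _.
  by have := all i; rewrite negbK.
apply: leq_trans (leq_bigmax i).
set Wi := (Hs i + w)%MS.
have sHi : (Hs i <= Wi)%MS by exact: addsmxSl.
have sw : (w <= Wi)%MS by exact: addsmxSr.
have nWi : ~~ (Wi <= Hs i)%MS.
  by apply: contra wi => h; exact: submx_trans sw h.
have Hik : (\rank (Hs i) == k) = false.
  apply/negbTE; apply: contra wi => h; exact: submx_full.
have rWi : \rank Wi = (\rank (Hs i)).+1.
  apply/eqP; rewrite eqn_leq; apply/andP; split.
    apply: leq_trans (mxrank_adds_leqif _ _) _.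
    by rewrite -[X in (_ <= X)%N]addn1 leq_add2l rank_leq_row.
  by rewrite ltn_neqAle (mxrank_leqif_sup sHi).2 nWi (mxrankS sHi).
rewrite /mu Hik.
apply: leq_trans (@leq_bigmax_cond _ _ _ Wi _); last first.
  by rewrite /= /ltmx sHi nWi rWi eqxx.
apply: bigmin_sub => v /andP [pi npi]; rewrite /in_perp in pi npi *.
have HHi : (H <= Hs i)%MS.
  by rewrite eqH; apply: bigcapmx_inf.
apply/andP; split.
  by apply/eqP; apply: (perp_sub HHi); apply/eqP.
apply: contra npi => /eqP pW; apply/eqP.
apply: perp_adds; first by apply/eqP.
exact: (perp_sub (row_sub j W)).
Qed.
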